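(* $\mathfrak{L}(\mathrm{rtNBVA}(2))\not\subseteq\bigcup_k\mathfrak{L}(\mathrm{rtDBVA}(k))$.
   Context: $\mathfrak{L}(A)$ denotes the class of languages recognized by machines of type $A$; the union ranges over $k\ge1$. A real-time deterministic blind vector automaton of dimension $k$ ($\mathrm{rtDBVA}(k)$) is a 6-tuple $(Q,\Sigma,\delta,q_0,Q_a,v)$ with finite state set $Q$, initial state $q_0$, accept states $Q_a$, initial row vector $v\in\mathbb{Q}^k$ (freely chosen), and $\delta:Q\times(\Sigma\cup\{\cent,\$\})\to Q\times S$, $S$ the set of $k\times k$ rational matrices; the input $w$ is read as $\cent w\$$ left to right, one symbol per step, and $\delta(q,\sigma)=(q',M)$ means that in state $q$ reading $\sigma$ the machine goes to $q'$ and multiplies its row vector on the right by $M$. The input is accepted iff after processing $\$$ the state is in $Q_a$ and the first vector entry equals $1$. A real-time nondeterministic blind vector automaton of dimension $k$ ($\mathrm{rtNBVA}(k)$) is defined the same way except that $\delta:Q\times(\Sigma\cup\{\cent,\$\})\to\mathcal{P}(Q\times S)$ (power set), each step choosing one pair from $\delta(q,\sigma)$; an input is accepted iff some computation path ends, after processing $\$$, in a state of $Q_a$ with first vector entry equal to $1$. *)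

(* Defs.v *)
From HB Require Import structures.
From mathcomp Require Import all_boot all_order all_algebra.
Set Implicit Arguments. Unset Strict Implicit. Unset Printing Implicit Defensive.
Import GRing.Theory Num.Theory.
Local Open Scope ring_scope.

Inductive tape_sym (Sigma : Type) : Type :=
  | Cent : tape_sym Sigma
  | Dollar : tape_sym Sigma
  | Sym : Sigma -> tape_sym Sigma.
Arguments Cent {Sigma}.
Arguments Dollar {Sigma}.

Definition tape (Sigma : Type) (w : seq Sigma) : seq (tape_sym Sigma) :=
  Cent :: rcons (map (@Sym Sigma) w) Dollar.

(* "the first entry of the vector equals 1" (meaningful for k >= 1) *)
Definition first_entry_is_one (k : nat) (x : 'rV[rat]_k) : Prop :=
  forall i : 'I_k, nat_of_ord i = 0%N -> x 0 i = 1.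

Record rtDBVA (Sigma : Type) (k : nat) := MkDBVA {
  dQ : finType;
  dq0 : dQ;
  dQa : {set dQ};
  dv : 'rV[rat]_k;
  ddelta : dQ -> tape_sym Sigma -> dQ * 'M[rat]_k }.

Definition dstep (Sigma : Type) (k : nat) (M : rtDBVA Sigma k)
  (c : dQ M * 'rV[rat]_k) (a : tape_sym Sigma) : dQ M * 'rV[rat]_k :=
  let t := ddelta c.1 a in (t.1, c.2 *m t.2).

Definition drun (Sigma : Type) (k : nat) (M : rtDBVA Sigma k) (w : seq Sigma)
  : dQ M * 'rV[rat]_k :=
  foldl (dstep (M := M)) (dq0 M, dv M) (tape w).

Definition daccepts (Sigma : Type) (k : nat) (M : rtDBVA Sigma k)
  (w : seq Sigma) : Prop :=
  (drun M w).1 \in dQa M /\ first_entry_is_one (drun M w).2.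

Record rtNBVA (Sigma : Type) (k : nat) := MkNBVA {
  nQ : finType;
  nq0 : nQ;
  nQa : {set nQ};
  nv : 'rV[rat]_k;
  ndelta : nQ -> tape_sym Sigma -> seq (nQ * 'M[rat]_k) }.

Definition nstep (Sigma : Type) (k : nat) (M : rtNBVA Sigma k)
  (cs : seq (nQ M * 'rV[rat]_k)) (a : tape_sym Sigma)
  : seq (nQ M * 'rV[rat]_k) :=
  flatten [seq [seq (p.1, c.2 *m p.2) | p <- ndelta c.1 a] | c <- cs].

Definition nrun (Sigma : Type) (k : nat) (M : rtNBVA Sigma k) (w : seq Sigma)
  : seq (nQ M * 'rV[rat]_k) :=
  foldl (nstep (M := M)) [:: (nq0 M, nv M)] (tape w).

Definition naccepts (Sigma : Type) (k : nat) (M : rtNBVA Sigma k)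
  (w : seq Sigma) : Prop :=
  exists2 c, c \in nrun M w & (c.1 \in nQa M /\ first_entry_is_one c.2).

Definition dlang (Sigma : Type) (k : nat) (M : rtDBVA Sigma k) : seq Sigma -> Prop :=
  fun w => daccepts M w.
Definition nlang (Sigma : Type) (k : nat) (M : rtNBVA Sigma k) : seq Sigma -> Prop :=
  fun w => naccepts M w.

Definition recognizes {Sigma : Type} (A L : seq Sigma -> Prop) : Prop :=
  forall w, A w <-> L w.

(* Main.v *)
Require Import Defs.
From mathcomp Require Import all_boot all_order all_algebra.
From mathcomp Require Import ring lra.
Set Implicit Arguments. Unset Strict Implicit. Unset Printing Implicit Defensive.
Import GRing.Theory Num.Theory.
Local Open Scope ring_scope.

Fixpoint exl (T : Type) (F : T -> Prop) (l : seq T) : Prop :=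
  match l with [::] => False | p :: l' => F p \/ exl F l' end.

Lemma exlP (T : eqType) (F : T -> Prop) l :
  (exists2 p, p \in l & F p) <-> exl F l.
Proof.
elim: l => [|p l IH] /=; first by split=> // -[].
split.
  case=> x; rewrite inE => /orP [/eqP -> Fx|xl Fx]; first by left.
  by right; apply/IH; exists x.
case=> [Fp|/IH [x xl Fx]]; first by exists p; rewrite ?inE ?eqxx.
by exists x; rewrite // inE xl orbT.
Qed.

Section N.
Variables (Sigma : Type) (k : nat) (M : rtNBVA Sigma k).

Fixpoint nacc (q : nQ M) (u : 'rV[rat]_k) (s : seq (tape_sym Sigma)) : Prop :=
  match s with
  | [::] => q \in nQa M /\ first_entry_is_one u
  | a :: s' => exl (fun p => nacc p.1 (u *m p.2) s') (ndelta q a)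
  end.

Lemma nfoldP cs s :
  (exists2 c, c \in foldl (nstep (M:=M)) cs s & (c.1 \in nQa M /\ first_entry_is_one c.2))
  <-> exl (fun c => nacc c.1 c.2 s) cs.
Proof.
elim: s cs => [|a s IH] cs /=.
  split; first by move=> H; apply/exlP.
  by move=> /exlP.
split.
  move=> H; apply/exlP; have := (proj1 (IH _) H) => /exlP.
  case=> c1 /flatten_mapP [c0 c0in /mapP [p pin ->]] H2.
  by exists c0 => //; apply/exlP; exists p.
move=> /exlP H; apply/(proj2 (IH _)); apply/exlP; move: H.
case=> c0 c0in /exlP [p pin H].
exists (p.1, c0.2 *m p.2) => //.
by apply/flatten_mapP; exists c0 => //; apply/mapP; exists p.
Qed.

Lemma naccepts_nacc w :
  naccepts M w <-> nacc (nq0 M) (nv M) (tape w).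
Proof.
rewrite /naccepts /nrun; split.
  by move=> /nfoldP /= [].
by move=> H; apply/nfoldP; left.
Qed.
End N.
Definition vec (x : rat) : 'rV[rat]_2 := \row_(j < 2) (if j == 0 :> nat then x else 1).
Definition mat (d : rat) : 'M[rat]_2 :=
  \matrix_(i < 2, j < 2) (if (i == 1 :> nat) && (j == 0 :> nat) then d
                          else if i == j then 1 else 0).

Lemma vec_mat x d : vec x *m mat d = vec (x + d).
Proof.
apply/rowP => j; rewrite !mxE !big_ord_recl big_ord0 !mxE.
case: j => [[|[|//]] ?] /=; rewrite ?mxE /=; ring.
Qed.

Lemma first_vec x : first_entry_is_one (vec x) <-> x = 1.
Proof.
split.
  by move=> /(_ ord0 erefl); rewrite mxE.
by move=> -> i /= i0; rewrite mxE i0.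
Qed.

Definition ndel (q : option bool) (a : tape_sym bool) : seq (option bool * 'M[rat]_2) :=
  match q, a with
  | None, Cent => [:: (Some true, mat (-1)); (Some false, mat 1)]
  | Some true, Sym true => [:: (Some true, mat 1); (Some true, mat 0)]
  | Some true, Sym false => [:: (Some true, mat (-1))]
  | Some false, Sym true => [:: (Some false, mat 1)]
  | Some false, Sym false => [:: (Some false, mat (-1)); (Some false, mat 0)]
  | Some b, Dollar => [:: (Some b, mat 0)]
  | _, _ => [::]
  end.

Definition MN : rtNBVA bool 2 :=
  MkNBVA (None : option bool) [set Some true; Some false] (vec 1) ndel.

Definition Lg (w : seq bool) : Prop := count id w <> count negb w.

Lemma accP x w : nacc (M:=MN) (Some true) (vec x) (rcons (map (@Sym bool) w) Dollar)
  <-> exists c, (c <= count id w)%N /\ x + c%:R - (count negb w)%:R = 1.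
Proof.
elim: w x => [|b w IH] x /=.
  rewrite vec_mat addr0 first_vec /=; split.
    by case=> // -[_ ->]; exists 0%N; split => //; lra.
  case=> c []; rewrite leqn0 => /eqP -> H; left; split; first by rewrite !inE eqxx.
  by move: H; rewrite subr0 addr0.
case: b => /=; rewrite ?add1n ?add0n.
  rewrite !vec_mat; split.
    case=> [/IH [c [Hc H]]|[/IH [c [Hc H]]|//]].
      by exists c.+1; split => //; rewrite -addn1 natrD; lra.
    by exists c; split; [exact: (leq_trans Hc (leqnSn _)) | lra].
  case=> -[|c] [Hc H].
    by right; left; apply/IH; exists 0%N; split => //; lra.
  by left; apply/IH; exists c; split => //; move: H; rewrite -addn1 natrD; lra.
rewrite !vec_mat; split.
  case=> [/IH [c [Hc H]]|//].
  by exists c; split => //; rewrite -addn1 natrD; lra.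
case=> c [Hc H]; left; apply/IH; exists c; split => //.
by move: H; rewrite -addn1 natrD; lra.
Qed.

Lemma accR x w : nacc (M:=MN) (Some false) (vec x) (rcons (map (@Sym bool) w) Dollar)
  <-> exists d, (d <= count negb w)%N /\ x + (count id w)%:R - d%:R = 1.
Proof.
elim: w x => [|b w IH] x /=.
  rewrite vec_mat addr0 first_vec /=; split.
    by case=> // -[_ ->]; exists 0%N; split => //; lra.
  case=> c []; rewrite leqn0 => /eqP -> H; left; split; first by rewrite !inE eqxx orbT.
  by move: H; rewrite subr0; lra.
case: b => /=; rewrite ?add1n ?add0n.
  rewrite !vec_mat; split.
    case=> [/IH [c [Hc H]]|//].
    by exists c; split => //; rewrite -addn1 natrD; lra.
  case=> c [Hc H]; left; apply/IH; exists c; split => //.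
  by move: H; rewrite -addn1 natrD; lra.
rewrite !vec_mat; split.
  case=> [/IH [c [Hc H]]|[/IH [c [Hc H]]|//]].
    by exists c.+1; split => //; rewrite -addn1 natrD; lra.
  by exists c; split; [exact: (leq_trans Hc (leqnSn _)) | lra].
case=> -[|c] [Hc H].
  by right; left; apply/IH; exists 0%N; split => //; lra.
by left; apply/IH; exists c; split => //; move: H; rewrite -addn1 natrD; lra.
Qed.

Lemma MN_ok : recognizes (nlang MN) Lg.
Proof.
move=> w; rewrite /nlang /Lg; split.
  move=> /naccepts_nacc /=; rewrite !vec_mat.
  case=> [/accP [c [Hc H]]|[/accR [d [Hd H]]|//]] E.
    have : c%:R = ((count negb w).+1)%:R :> rat by rewrite -addn1 natrD; lra.
    move/eqP; rewrite eqr_nat => /eqP Ec; move: Hc; rewrite Ec E.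
    by rewrite ltnn.
  have : d%:R = ((count id w).+1)%:R :> rat by rewrite -addn1 natrD; lra.
  move/eqP; rewrite eqr_nat => /eqP Ed; move: Hd; rewrite Ed E.
  by rewrite ltnn.
move=> Hne; apply/naccepts_nacc => /=; rewrite !vec_mat.
case: (ltngtP (count negb w) (count id w)) => Hlt; last by rewrite Hlt in Hne.
  left; apply/accP; exists (count negb w).+1; split => //.
  rewrite -addn1 natrD; lra.
right; left; apply/accR; exists (count id w).+1; split => //.
rewrite -addn1 natrD; lra.
Qed.

Lemma pigeon (T Q : finType) (g : T -> Q) m :
  (#|Q| * m < #|T|)%N -> exists q, (m < #|[set i | g i == q]|)%N.
Proof.
move=> H; case: (pickP (fun q => (m < #|[set i | g i == q]|)%N)) => [q Hq|Hall].
  by exists q.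
exfalso; move: H; rewrite -[#|T|]sum1_card (partition_big g xpredT) //=.
apply/negP; rewrite -leqNgt -sum_nat_const leq_sum // => q _.
rewrite sum1_card.
have -> : #|[pred i | g i == q]| = #|[set i | g i == q]|.
  by apply: eq_card => i; rewrite !inE.
by rewrite leqNgt Hall.
Qed.

Section Det.
Variables (k : nat) (D : rtDBVA bool k.+1).

Fixpoint dtr (q : dQ D) (s : seq (tape_sym bool)) : dQ D * 'M[rat]_k.+1 :=
  match s with
  | [::] => (q, 1%:M)
  | a :: s' => let t := ddelta q a in let r := dtr t.1 s' in (r.1, t.2 *m r.2)
  end.

Lemma dfold q u s :
  foldl (dstep (M:=D)) (q, u) s = ((dtr q s).1, u *m (dtr q s).2).
Proof.
elim: s q u => [|a s IH] q u /=; first by rewrite mulmx1.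
by rewrite /dstep IH /= mulmxA.
Qed.

Definition cfg n := foldl (dstep (M:=D)) (dq0 D, dv D) (Cent :: map (@Sym bool) (nseq n true)).

Definition rr n m := dtr (cfg n).1 (rcons (map (@Sym bool) (nseq m false)) Dollar).

Lemma dacc n m : daccepts D (nseq n true ++ nseq m false) <->
  (rr n m).1 \in dQa D /\ ((cfg n).2 *m (rr n m).2) 0 0 = 1.
Proof.
have E : drun D (nseq n true ++ nseq m false) = ((rr n m).1, (cfg n).2 *m (rr n m).2).
  rewrite /drun /tape map_cat rcons_cat -cat_cons foldl_cat /rr /cfg.
  by case: (foldl (dstep (M:=D)) (dq0 D, dv D) _) => q u; rewrite dfold.
rewrite /daccepts E /=; split; case=> H1 H2; split => //.
  exact: H2.
move=> i /= i0; have -> : i = 0 by apply: val_inj.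
exact: H2.
Qed.

Lemma Lg_nm n m : Lg (nseq n true ++ nseq m false) <-> n <> m.
Proof. by rewrite /Lg !count_cat !count_nseq /= !mul1n !mul0n addn0. Qed.

Lemma no_det : ~ recognizes (dlang D) Lg.
Proof.
move=> HD.
have := @pigeon 'I_((#|dQ D| * k.+1).+1) (dQ D) (fun i => (cfg i.+1).1) k.+1.
rewrite card_ord ltnSn => /(_ isT) [q Hq].
set P := [set i | _ == q] in Hq.
set e := enum P.
have He : size e = #|P| by rewrite cardE.
pose idx (s : 'I_k.+2) := nth ord0 e s.
have Hs (s : 'I_k.+2) : (s < size e)%N by rewrite He; apply: leq_trans Hq; apply: ltn_ord.
have Hidq s : (cfg (idx s).+1).1 = q.
  have : idx s \in P by rewrite -mem_enum mem_nth.
  by rewrite inE => /eqP.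
have Hinj s t : idx s = idx t -> s = t.
  move=> /eqP; rewrite nth_uniq ?Hs ?enum_uniq // => /eqP st.
  exact: val_inj.
pose u s := (cfg (idx s).+1).2.
pose U := \matrix_(s < k.+2, j < k.+1) u s 0 j.
have HK : kermx U != 0.
  rewrite -mxrank_eq0 mxrank_ker subn_eq0 -ltnNge.
  by apply: leq_ltn_trans (rank_leq_col U) _.
have [i [j Hij]] : exists i j, kermx U i j != 0.
  case: (pickP (fun ij : 'I_k.+2 * 'I_k.+2 => kermx U ij.1 ij.2 != 0)) => [[i j] H|H].
    by exists i, j.
  move: HK => /negP; case; apply/eqP/matrixP => i j.
  by have := H (i, j); move=> /= /negbFE /eqP ->; rewrite mxE.
pose mu := row i (kermx U).
have HmuU : mu *m U = 0 by rewrite /mu -row_mul mulmx_ker row0.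
have Hsum (M : 'M[rat]_k.+1) : \sum_s mu 0 s * (u s *m M) 0 0 = 0.
  have := congr1 (fun A => (A *m M) 0 0) HmuU; rewrite /= -mulmxA mul0mx !mxE => E.
  apply: eq_trans E; apply: eq_bigr => s _; congr (_ * _); rewrite !mxE.
  apply: eq_bigr => l _; rewrite !mxE.
  done.
pose R m := dtr q (rcons (map (@Sym bool) (nseq m false)) Dollar).
have Acc s m : daccepts D (nseq (idx s).+1 true ++ nseq m false) <->
    (R m).1 \in dQa D /\ (u s *m (R m).2) 0 0 = 1.
  by rewrite /R -(Hidq s); exact: dacc.
have Hyes s m : (idx s).+1 <> m -> (R m).1 \in dQa D /\ (u s *m (R m).2) 0 0 = 1.
  by move=> H; apply/(proj1 (Acc s m)); apply/(proj2 (HD _)); apply/(proj2 (Lg_nm _ _)).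
have Hno s : ~ ((R (idx s).+1).1 \in dQa D /\ (u s *m (R (idx s).+1).2) 0 0 = 1).
  by move=> /(proj2 (Acc _ _)) /(proj1 (HD _)) /(proj1 (Lg_nm _ _)); apply.
have Hsum0 : \sum_s mu 0 s = 0.
  apply: eq_trans (Hsum (R 0%N).2); apply: eq_bigr => s _.
  by rewrite (proj2 (Hyes s 0%N _)) ?mulr1.
have Hmu0 t : mu 0 t = 0.
  set m := (idx t).+1.
  have Hoth s : s != t -> (u s *m (R m).2) 0 0 = 1.
    move=> st; apply: (proj2 (Hyes s m _)) => -[] /val_inj /Hinj E.
    by rewrite E eqxx in st.
  have Qa : (R m).1 \in dQa D.
    apply: (proj1 (Hyes (lift t ord0) m _)) => -[] /val_inj /Hinj E.
    by move: (neq_lift t ord0); rewrite E eqxx.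
  have Hv : (u t *m (R m).2) 0 0 != 1 by apply/eqP => H; apply: (Hno t).
  have := Hsum (R m).2; rewrite (bigD1 t) //=.
  rewrite (eq_bigr (fun s => mu 0 s)); last by move=> s st; rewrite Hoth ?mulr1.
  move: Hsum0; rewrite (bigD1 t) //= => H0 H1.
  have : mu 0 t * ((u t *m (R m).2) 0 0 - 1) = 0.
    rewrite mulrBr mulr1; set a := mu 0 t * _ in H1 *; set b := \sum_(_ | _) _ in H0 H1.
    lra.
  move/eqP; rewrite mulf_eq0 subr_eq0 (negbTE Hv) orbF => /eqP //.
move/eqP: Hij; apply; have := Hmu0 j; rewrite /mu mxE.
done.
Qed.
End Det.

Theorem theorem14 :
  exists (Sigma : finType) (L : seq Sigma -> Prop),
    (exists M : rtNBVA Sigma 2, recognizes (nlang M) L) /\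
    (forall k : nat, (1 <= k)%N ->
       forall D : rtDBVA Sigma k, ~ recognizes (dlang D) L).
Proof.
exists bool, Lg; split; first by exists MN; exact: MN_ok.
by case=> // k _ D; exact: no_det.
Qed.
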